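(* For all $N\in\mathbb Z_{\ge1}$, $m\in\mathbb Z$ and primitive $k$th roots of unity $\xi$, $$A_m(\xi,N)=\frac{(-1)^N\xi^{-m}}{N!}\sum_{u+v+j_1+\dots+j_N=N+m}B_v^{(m+1)}\beta_{j_1}(\xi)\beta_{j_2}(\xi^2)\cdots\beta_{j_N}(\xi^N)\frac{1^{j_1}2^{j_2}\cdots N^{j_N}}{u!\,v!\,j_1!\cdots j_N!},$$ the sum over all $u,v,j_1,\dots,j_N\in\mathbb Z_{\ge0}$ (an empty sum being $0$).
   Context: $(q)_N:=(1-q)\cdots(1-q^N)$ and $A_m(\xi,N)$ is the coefficient of $(q-\xi)^m$ in the Laurent expansion of $1/(q)_N$ about $q=\xi$. Nörlund polynomials: $(z/(e^z-1))^\alpha=\sum_n B_n^{(\alpha)}z^n/n!$. Apostol–Bernoulli numbers: $\frac{z}{\rho e^z-1}=\sum_{n\ge0}\beta_n(\rho)z^n/n!$ for $\rho\in\mathbb C$. *)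

(* Defs.v *)
(* Complex numbers are modelled by algC (algebraic closure
   of Q inside C); all quantities in the statement are algebraic. *)
From HB Require Import structures.
From mathcomp Require Import all_boot all_order all_algebra all_field.
Set Implicit Arguments. Unset Strict Implicit. Unset Printing Implicit Defensive.
Import Order.TTheory GRing.Theory Num.Theory.
Local Open Scope ring_scope.

Definition ps_one : nat -> algC := fun n => (n == 0)%:R.
Definition ps_mul (a b : nat -> algC) : nat -> algC :=
  fun n => \sum_(i < n.+1) a i * b (n - i)%N.
Definition ps_pow (a : nat -> algC) (k : nat) : nat -> algC :=
  iter k (ps_mul a) ps_one.

Fixpoint ps_inv_seq (a : nat -> algC) (n : nat) : seq algC :=
  match n with
  | 0 => [:: (a 0%N)^-1]
  | n'.+1 => let s := ps_inv_seq a n' in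
      rcons s (- (a 0%N)^-1 * \sum_(i < n'.+1) a i.+1 * nth 0 s (n' - i)%N)
  end.
Definition ps_inv (a : nat -> algC) : nat -> algC :=
  fun n => nth 0 (ps_inv_seq a n) n.

Definition ps_exp : nat -> algC := fun n => (n`!%:R)^-1.
Definition ps_expm1_div : nat -> algC := fun n => ((n.+1)`!%:R)^-1.

(* Coefficient of t^m (m : int) in the Laurent expansion at t = 0 of 1/p(t),
   for a nonzero polynomial p: write p = t^r Q with Q(0) <> 0
   (r = index of the first nonzero coefficient); then
   1/p = t^(-r) Q^(-1). *)
Definition laurent_inv_coef (p : {poly algC}) (m : int) : algC :=
  let r := find (fun c => c != 0) p in
  let Q := fun i => p`_(i + r) in
  match (m + r%:Z)%R with
  | Posz n => ps_inv Q n
  | Negz _ => 0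
  end.

(* (q)_N = (1-q)...(1-q^N), written in the local variable t = q - xi. *)
Definition qpoch_shift (xi : algC) (N : nat) : {poly algC} :=
  \prod_(1 <= j < N.+1) (1 - ('X + xi%:P) ^+ j).

Definition A_coef (m : int) (xi : algC) (N : nat) : algC :=
  laurent_inv_coef (qpoch_shift xi N) m.

(* Noerlund polynomials at integer alpha:
   (z/(e^z-1))^alpha = sum_n B_n^(alpha) z^n/n!.
   For alpha = n >= 0 this is 1/((e^z-1)/z)^n, for alpha = -(n+1) it is
   ((e^z-1)/z)^(n+1). *)
Definition norlund (alpha : int) (v : nat) : algC :=
  v`!%:R *
  (match alpha with
   | Posz n => ps_inv (ps_pow ps_expm1_div n)
   | Negz n => ps_pow ps_expm1_div n.+1
   end) v.

(* Apostol-Bernoulli numbers: z/(rho e^z - 1) = sum beta_n(rho) z^n/n!.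
   If rho = 1 this is 1/((e^z-1)/z); otherwise rho e^z - 1 has nonzero
   constant term rho - 1 and z/(rho e^z - 1) = z * (rho e^z - 1)^(-1). *)
Definition apostol (rho : algC) (n : nat) : algC :=
  n`!%:R *
  (if rho == 1 then ps_inv ps_expm1_div n
   else match n with
        | 0 => 0
        | n'.+1 => ps_inv (fun i => rho * ps_exp i - (i == 0)%:R) n'
        end).

(* The right-hand side sum over u, v, j_1..j_N >= 0 with
   u + v + j_1 + ... + j_N = N + m (empty, hence 0, if N + m < 0).
   j : 'I_N -> nat encodes j_(i+1) = j i. *)
Definition rhs_sum (N : nat) (m : int) (xi : algC) : algC :=
  match (N%:Z + m)%R with
  | Negz _ => 0
  | Posz s =>
    \sum_(u < s.+1) \sum_(v < s.+1)
      \sum_(j : {ffun 'I_N -> 'I_s.+1} | (u + v + \sum_(i < N) (j i : nat))%N == s)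
        norlund (m + 1) v
        * (\prod_(i < N) (apostol (xi ^+ i.+1) (j i)
                          * (i.+1)%:R ^+ (j i) / ((j i)`!)%:R))
        / (u`!%:R * v`!%:R)
  end.

(* Main.v *)
Require Import Defs.
From HB Require Import structures.
From mathcomp Require Import all_boot all_order all_algebra all_field.
From mathcomp Require Import ring zify.
Import Order.TTheory GRing.Theory Num.Theory.
Local Open Scope ring_scope.
Implicit Types p q r A B C T : {poly algC}.


Definition eqm n (p q : {poly algC}) := 'X^n %| p - q.

Lemma eqm_coef n p q i : eqm n p q -> (i < n)%N -> p`_i = q`_i.
Proof.
move=> /dvdpP [d Hd] Hi; apply/eqP; rewrite -subr_eq0 -coefB Hd coefMXn Hi //.
Qed.

Lemma coef_eqm n (p q : {poly algC}) : (forall i, (i < n)%N -> p`_i = q`_i) -> eqm n p q.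
Proof.
move=> H; rewrite /eqm.
have Ht : take_poly n (p - q) = 0.
  by apply/polyP => i; rewrite coef_take_poly coef0 coefB; case: ifP => // /H ->; rewrite subrr.
by rewrite -(poly_take_drop n (p - q)) Ht add0r dvdp_mull.
Qed.

Lemma eqm_refl n p : eqm n p p.
Proof. by rewrite /eqm subrr dvdp0. Qed.
Lemma eqm_sym n p q : eqm n p q -> eqm n q p.
Proof. by rewrite /eqm -opprB dvdpNr. Qed.
Lemma eqm_trans n p q r : eqm n p q -> eqm n q r -> eqm n p r.
Proof. by rewrite /eqm => H1 H2; have := dvdp_add H1 H2; rewrite addrA subrK. Qed.
Lemma eqmD n p q p' q' : eqm n p q -> eqm n p' q' -> eqm n (p + p') (q + q').
Proof.
by rewrite /eqm => H1 H2; have := dvdp_add H1 H2; rewrite opprD addrACA.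
Qed.
Lemma eqmN n p q : eqm n p q -> eqm n (- p) (- q).
Proof. by rewrite /eqm -opprD dvdpNr. Qed.
Lemma eqmB n p q p' q' : eqm n p q -> eqm n p' q' -> eqm n (p - p') (q - q').
Proof. by move=> H1 H2; apply: eqmD => //; apply: eqmN. Qed.
Lemma eqmMr n p q r : eqm n p q -> eqm n (p * r) (q * r).
Proof. by rewrite /eqm -mulrBl => H; apply: dvdp_mulr. Qed.
Lemma eqmM n p q p' q' : eqm n p q -> eqm n p' q' -> eqm n (p * p') (q * q').
Proof.
move=> H1 H2; apply: (@eqm_trans _ _ (q * p')); first exact: eqmMr.
by rewrite ![q * _]mulrC; apply: eqmMr.
Qed.
Lemma eqmX n p q k : eqm n p q -> eqm n (p ^+ k) (q ^+ k).
Proof.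
move=> H; elim: k => [|k IH]; first exact: eqm_refl.
by rewrite !exprS; apply: eqmM.
Qed.
Lemma eqm_le n m p q : (m <= n)%N -> eqm n p q -> eqm m p q.
Proof. by move=> Hmn H; apply: dvdp_trans H; apply: dvdp_exp2l. Qed.
Lemma eqm_prod n (I : finType) (F G : I -> {poly algC}) :
  (forall i, eqm n (F i) (G i)) -> eqm n (\prod_i F i) (\prod_i G i).
Proof.
move=> H; elim/big_rec2: _ => [|i a b _ Hab]; first exact: eqm_refl.
exact: eqmM.
Qed.
Lemma eqmZ n c p q : eqm n p q -> eqm n (c *: p) (c *: q).
Proof. by rewrite -!mul_polyC => H; rewrite ![c%:P * _]mulrC; apply: eqmMr. Qed.
Lemma eqm_comp n p q T : 'X %| T -> eqm n p q -> eqm n (p \Po T) (q \Po T).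
Proof.
move=> /dvdpP [e He] /dvdpP [d Hd]; rewrite /eqm.
rewrite -linearB /= Hd comp_polyM rmorphXn /= comp_polyX He exprMn mulrA.
exact: dvdp_mull.
Qed.
Lemma eqm_cancel n (r : nat) p q : (r <= n)%N -> eqm n ('X^r * p) ('X^r * q) -> eqm (n - r) p q.
Proof.
move=> Hr; rewrite /eqm -mulrBr.
have -> : ('X^n : {poly algC}) = 'X^r * 'X^(n - r) by rewrite -exprD subnKC.
by rewrite dvdp_mul2l // expf_neq0 // polyX_eq0.
Qed.
Lemma eqm_deriv n p q : eqm n p q -> eqm n.-1 p^`() q^`().
Proof.
move=> H; apply: coef_eqm => i Hi; rewrite !coef_deriv (eqm_coef _ _ _ _ H) //.
by case: n Hi {H}.
Qed.
Lemma eqm0 p q : eqm 0 p q.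
Proof. by rewrite /eqm expr0 dvd1p. Qed.

Definition tr n (a : nat -> algC) : {poly algC} := \poly_(i < n) a i.

Lemma tr_mul n a b : eqm n (tr n (ps_mul a b)) (tr n a * tr n b).
Proof.
apply: coef_eqm => i Hi; rewrite coef_poly Hi coefM /ps_mul.
apply: eq_bigr => j _; rewrite !coef_poly.
have Hj : (j < n)%N by apply: leq_ltn_trans Hi; rewrite -ltnS.
have Hij : (i - j < n)%N by apply: leq_ltn_trans (leq_subr _ _) Hi.
by rewrite Hj Hij.
Qed.

Lemma tr_one n : eqm n (tr n ps_one) 1.
Proof. by apply: coef_eqm => i Hi; rewrite coef_poly Hi coef1. Qed.

Lemma tr_pow n a k : eqm n (tr n (ps_pow a k)) (tr n a ^+ k).
Proof.
elim: k => [|k IH]; first exact: tr_one.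
rewrite exprS; apply: eqm_trans (tr_mul _ _ _) _.
by apply: eqmM => //; exact: eqm_refl.
Qed.

Lemma tr_ext n a b : (forall i, (i < n)%N -> a i = b i) -> tr n a = tr n b.
Proof. by move=> H; apply/polyP => i; rewrite !coef_poly; case: ifP => // /H. Qed.

Lemma tr_le n m a : (m <= n)%N -> eqm m (tr n a) (tr m a).
Proof.
move=> H; apply: coef_eqm => i Hi; rewrite !coef_poly Hi.
by rewrite (leq_trans Hi H).
Qed.

Lemma size_ps_inv_seq a n : size (ps_inv_seq a n) = n.+1.
Proof. by elim: n => //= n IH; rewrite size_rcons IH. Qed.

Lemma nth_ps_inv_seq a n i : (i <= n)%N -> nth 0 (ps_inv_seq a n) i = ps_inv a i.
Proof.
elim: n => [|n IH]; first by rewrite leqn0 => /eqP ->.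
rewrite leq_eqVlt => /orP [/eqP -> //|Hi].
by rewrite /= nth_rcons size_ps_inv_seq Hi IH.
Qed.

Lemma ps_inv0 a : ps_inv a 0 = (a 0%N)^-1.
Proof. by []. Qed.

Lemma ps_invS a n : ps_inv a n.+1 =
  - (a 0%N)^-1 * \sum_(i < n.+1) a i.+1 * ps_inv a (n - i)%N.
Proof.
rewrite /ps_inv /= nth_rcons size_ps_inv_seq ltnn eqxx.
congr (_ * _); apply: eq_bigr => i _; rewrite nth_ps_inv_seq //.
exact: leq_subr.
Qed.

Lemma ps_mul_inv a n : a 0%N != 0 -> ps_mul a (ps_inv a) n = ps_one n.
Proof.
move=> Ha; case: n => [|n]; rewrite /ps_mul /ps_one.
  by rewrite big_ord1 ps_inv0 divff.
rewrite big_ord_recl /= subn0 ps_invS mulrA mulrN divff // mulN1r.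
rewrite addrC; apply/eqP; rewrite subr_eq0; apply/eqP.
by apply: eq_bigr => i _; rewrite subSS.
Qed.

Lemma tr_inv n a : a 0%N != 0 -> eqm n (tr n a * tr n (ps_inv a)) 1.
Proof.
move=> Ha; apply: (eqm_trans _ _ _ _ (eqm_sym _ _ _ (tr_mul _ _ _))).
rewrite (tr_ext _ _ ps_one); first exact: tr_one.
by move=> i _; apply: ps_mul_inv.
Qed.

Lemma eqm_inv_uniq n A B C : eqm n (A * B) 1 -> eqm n (A * C) 1 -> eqm n B C.
Proof.
move=> H1 H2.
have e1 : eqm n B (B * (A * C)) by rewrite -{1}(mulr1 B); apply: eqmM (eqm_refl _ _) (eqm_sym _ _ _ H2).
have e2 : eqm n (B * (A * C)) C.
  by rewrite mulrA (mulrC B) -{2}(mul1r C); apply: eqmMr.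
exact: (eqm_trans _ _ _ _ e1 e2).
Qed.

Definition Ex M := tr M ps_exp.
Definition Ph M := tr M ps_expm1_div.
Definition Ps M := tr M (ps_inv ps_expm1_div).

Lemma fact_neq0 n : (n`!%:R : algC) != 0.
Proof. by rewrite pnatr_eq0 -lt0n fact_gt0. Qed.

Lemma PhPs M : eqm M (Ph M * Ps M) 1.
Proof. by apply: tr_inv; rewrite /ps_expm1_div invr_eq0 fact_neq0. Qed.

Lemma Ps0 : ps_inv ps_expm1_div 0 = 1.
Proof. by rewrite ps_inv0 /ps_expm1_div /= invrK. Qed.

Lemma XPh M : eqm M ('X * Ph M) (Ex M - 1).
Proof.
apply: coef_eqm => i Hi; rewrite coefXM coefB coef1 !coef_poly Hi.
case: i Hi => [|i] Hi /=; first by rewrite /ps_exp invr1 subrr.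
by rewrite (ltn_trans (ltnSn i) Hi) subr0.
Qed.

Lemma ExD M : eqm M.-1 (Ex M)^`() (Ex M).
Proof.
apply: coef_eqm => i Hi; rewrite coef_deriv !coef_poly.
have Hi' : (i.+1 < M)%N by case: M Hi.
rewrite Hi' (ltn_trans (ltnSn i) Hi') /ps_exp factS natrM invfM.
by rewrite -[_ *+ i.+1]mulr_natr mulrAC mulVf ?mul1r // pnatr_eq0.
Qed.

Lemma eqm_add0 n p z : eqm n z 0 -> eqm n (p + z) p.
Proof. by move=> H; rewrite -{2}(addr0 p); apply: eqmD (eqm_refl _ _) H. Qed.

Lemma eqm_mul0 n p z : eqm n z 0 -> eqm n (p * z) 0.
Proof. by move=> H; rewrite -(mulr0 p); apply: eqmM (eqm_refl _ _) H. Qed.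

Lemma eqm0D n p q : eqm n p 0 -> eqm n q 0 -> eqm n (p + q) 0.
Proof. by move=> H1 H2; rewrite -(addr0 0); apply: eqmD. Qed.
Lemma eqm0B n p q : eqm n p 0 -> eqm n q 0 -> eqm n (p - q) 0.
Proof. by move=> H1 H2; rewrite -(subr0 0); apply: eqmB. Qed.

Lemma eqmX_1 n p k : eqm n p 1 -> eqm n (p ^+ k) 1.
Proof. by move=> H; rewrite -(expr1n _ k); apply: eqmX. Qed.

Lemma ring_id1 (X S F E Sd Fd Ed : {poly algC}) : X * Sd = (S - S^+2 * E) +
  (X * S * (Fd * S + F * Sd) - S^+2 * (Ed - E) + S^+2 * (Ed - F - X * Fd)
   + X * Sd * (1 - F * S) - S * (1 - F * S)).
Proof. ring. Qed.

Lemma PsD M : eqm M.-1 ('X * (Ps M)^`()) (Ps M - Ps M ^+ 2 * Ex M).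
Proof.
rewrite (ring_id1 'X (Ps M) (Ph M) (Ex M) (Ps M)^`() (Ph M)^`() (Ex M)^`()).
apply: eqm_add0.
have Hu : eqm M (1 - Ph M * Ps M) 0.
  by rewrite -(subrr 1); apply: eqmB (eqm_refl _ _) (PhPs M).
have Hu' : eqm M.-1 (1 - Ph M * Ps M) 0 by apply: eqm_le Hu; apply: leq_pred.
have Hw0 : eqm M.-1 ((Ph M)^`() * Ps M + Ph M * (Ps M)^`()) 0.
  by rewrite -derivM -(derivC (1 : algC)); apply: eqm_deriv; apply: PhPs.
have Hy : eqm M.-1 ((Ex M)^`() - Ex M) 0.
  by rewrite -(subrr (Ex M)); apply: eqmB (ExD M) (eqm_refl _ _).
have Hv0 : eqm M.-1 ((Ex M)^`() - Ph M - 'X * (Ph M)^`()) 0.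
  have -> : (Ex M)^`() - Ph M - 'X * (Ph M)^`() = (Ex M - 1 - 'X * Ph M)^`().
    by rewrite !derivE; ring.
  rewrite -(derivC (0 : algC)); apply: eqm_deriv.
  rewrite polyC0 -(subrr ('X * Ph M)); apply: eqmB (eqm_sym _ _ _ (XPh M)) (eqm_refl _ _).
apply: eqm0B; last by apply: eqm_mul0.
apply: eqm0D; last by apply: eqm_mul0.
apply: eqm0D; last by apply: eqm_mul0.
apply: eqm0B; last by apply: eqm_mul0.
by apply: eqm_mul0.
Qed.

Lemma key M j : (j < M.-1)%N -> (Ex M * Ps M ^+ j.+1)`_j = (j == 0)%:R.
Proof.
case: j => [|j] Hj.
  have HM : (0 < M)%N by case: M Hj.
  by rewrite coef0M expr1 !coef_poly HM Ps0 /ps_exp invr1 mulr1.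
have H : eqm M.-1 ('X * (Ps M ^+ j.+1)^`())
   ((Ps M ^+ j.+1 - Ex M * Ps M ^+ j.+2) *+ j.+1).
  rewrite deriv_exp /= -mulrnAr mulrA.
  have -> : (Ps M ^+ j.+1 - Ex M * Ps M ^+ j.+2) = (Ps M - Ps M ^+ 2 * Ex M) * Ps M ^+ j.
    by rewrite !exprS; ring.
  rewrite -mulrnAl mulrnAr mulrnAl -[(_ * _) *+ _]mulr_natr -[((_ - _) * _) *+ _]mulr_natr.
  apply: eqmMr; apply: eqmMr.
  exact: PsD.
have := eqm_coef _ _ _ _ H Hj.
rewrite coefXM /= coef_deriv coefMn coefB => /eqP.
rewrite -subr_eq0 -mulrnBl opprB addrC subrK mulrn_eq0 /= => /eqP //.
Qed.

Lemma lagrange_inv M B (c : algC) n : (n < M.-1)%N ->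
  (Ex M * Ps M ^+ n.+1 * (B \Po (c%:P * ('X * Ph M))))`_n = c ^+ n * B`_n.
Proof.
move=> Hn; rewrite comp_polyE mulr_sumr coef_sum.
transitivity (\sum_(i < size B) if (i : nat) == n then c ^+ i * B`_i else 0).
  apply: eq_bigr => i _.
  have hc : (c%:P)^+i = (c^+i)%:P by rewrite rmorphXn.
  rewrite -scalerAr coefZ !exprMn hc.
  rewrite (mulrCA _ (c ^+ i)%:P) coefCM mulrCA coefXnM.
  case: ltnP => Hi.
    by rewrite eq_sym (ltn_eqF Hi) !mulr0.
  have Hni : (n - i < M.-1)%N by apply: leq_ltn_trans (leq_subr _ _) Hn.
  have Hc : (Ex M * Ps M ^+ n.+1 * Ph M ^+ i)`_(n - i) = ((n - i)%N == 0)%:R.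
    rewrite -(key _ _ Hni); apply: eqm_coef; last by apply: leq_trans Hni _; apply: leq_pred.
    have -> : (n.+1 = (n - i).+1 + i)%N by rewrite addSn subnK.
    rewrite exprD -mulrA -mulrA -exprMn -[X in eqm _ _ X]mulr1.
    rewrite mulrA; apply: eqmM (eqm_refl _ _) _; apply: eqmX_1; rewrite mulrC; apply: PhPs.
  rewrite Hc subn_eq0.
  case: eqP => [->|Hne]; first by rewrite leqnn mulr1 mulrC.
  have Hlt : (i < n)%N by rewrite ltn_neqAle Hi andbT; apply/eqP.
  by rewrite leqNgt Hlt /= !mulr0.
rewrite -big_mkcond (big_ord1_eq _ (fun j => c ^+ j * B`_j)).
case: ltnP => // Hs; by rewrite nth_default // mulr0.
Qed.

Lemma Ex_pow_aux M i n (Hn : (n < M)%N) : forall k, (k < n.+1)%N -> (tr M (fun n0 : nat => i%:R ^+ n0 / n0`!%:R))`_k * (Ex M)`_(n - k) =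
   (i%:R ^+ k *+ 'C(n, k)) / n`!%:R.
  move=> k Hk.
  have Hk' : (k < M)%N by apply: leq_ltn_trans Hn; rewrite -ltnS.
  have Hk2 : (n - k < M)%N by apply: leq_ltn_trans (leq_subr _ _) Hn.
  rewrite /Ex /tr !coef_poly Hk' Hk2 /ps_exp.
  rewrite ltnS in Hk.
  have Hb := bin_fact Hk.
  rewrite -Hb !natrM -[_ *+ 'C(n, k)]mulr_natr.
  have h1 := fact_neq0 k; have h2 := fact_neq0 (n - k).
  have h3 : ('C(n, k)%:R : algC) != 0 by rewrite pnatr_eq0 -lt0n bin_gt0.
  by field; rewrite h1 h2 h3.
Qed.

Lemma Ex_pow M i : eqm M (Ex M ^+ i) (tr M (fun n => i%:R ^+ n / n`!%:R)).
Proof.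
elim: i => [|i IH].
  apply: coef_eqm => n Hn; rewrite expr0 coef1 coef_poly Hn expr0n.
  by case: n {Hn} => [|n] /=; rewrite ?invr1 ?mulr1 ?mul0r.
rewrite exprSr; apply: eqm_trans (eqmMr _ _ _ _ IH) _.
apply: coef_eqm => n Hn; rewrite coefM coef_poly Hn.
rewrite (eq_bigr _ (fun k _ => Ex_pow_aux _ i _ Hn _ (ltn_ord k))) -mulr_suml.
rewrite -natr1 addrC exprDn.
congr (_ * _); apply: eq_bigr => k _; by rewrite expr1n mul1r.
Qed.

Lemma coef_dil p (c : algC) n : (p \Po (c *: 'X))`_n = c ^+ n * p`_n.
Proof.
rewrite coef_comp_poly.
rewrite (eq_bigr (fun i : 'I_(size p) => if (i : nat) == n then c ^+ i * p`_i else 0)); last first.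
  by move=> i _; rewrite exprZn coefZ coefXn eq_sym; case: eqP; rewrite ?mulr1 ?mulr0 // mulrC.
rewrite -big_mkcond (big_ord1_eq _ (fun j => c ^+ j * p`_j)).
by case: ltnP => // Hs; rewrite nth_default // mulr0.
Qed.

Lemma X_dvd_dil (c : algC) : 'X %| c *: 'X.
Proof. by rewrite -mul_polyC dvdp_mull. Qed.

Lemma Ex_dil M i : eqm M (Ex M ^+ i) (Ex M \Po (i%:R *: 'X)).
Proof.
apply: eqm_trans (Ex_pow M i) _; apply: coef_eqm => n Hn.
by rewrite coef_dil !coef_poly Hn /ps_exp.
Qed.

Definition hser M (rho : algC) := tr M (fun n => apostol rho n / n`!%:R).

Lemma apost M rho : eqm M ((rho *: Ex M - 1) * hser M rho) 'X.
Proof.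
rewrite /hser /apostol; case: eqP => [->|Hr].
  rewrite scale1r (tr_ext _ _ (ps_inv ps_expm1_div)); last first.
    by move=> n _; rewrite mulrC mulrA mulVf ?mul1r // fact_neq0.
  apply: eqm_trans (eqmMr _ _ _ _ (eqm_sym _ _ _ (XPh M))) _.
  rewrite -mulrA -[X in eqm _ _ X]mulr1; apply: eqmM (eqm_refl _ _) (PhPs M).
pose g := fun i : nat => rho * ps_exp i - (i == 0)%:R.
have Hg : eqm M (rho *: Ex M - 1) (tr M g).
  apply: coef_eqm => n Hn; rewrite coefB coefZ coef1 !coef_poly Hn.
  by rewrite /g.
have Hh : eqm M (tr M (fun n => n`!%:R * (match n with 0 => 0 | n'.+1 => ps_inv g n' end) / n`!%:R))
     ('X * tr M (ps_inv g)).
  apply: coef_eqm => n Hn; rewrite coefXM !coef_poly Hn.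
  case: n Hn => [|n] Hn /=; first by rewrite mulr0 mul0r.
  by rewrite (ltn_trans (ltnSn n) Hn) mulrC mulrA mulVf ?mul1r // fact_neq0.
apply: eqm_trans (eqmM _ _ _ _ _ Hg Hh) _.
rewrite mulrCA -[X in eqm _ _ X]mulr1; apply: eqmM (eqm_refl _ _) _.
apply: tr_inv; rewrite /g /ps_exp /= invr1 mulr1 subr_eq0; exact/eqP.
Qed.

Lemma apost_dil M rho (i : nat) :
  eqm M ((rho *: Ex M ^+ i - 1) * tr M (fun n => apostol rho n * i%:R ^+ n / n`!%:R))
        (i%:R *: 'X).
Proof.
have e1 : eqm M (tr M (fun n => apostol rho n * i%:R ^+ n / n`!%:R))
                (hser M rho \Po (i%:R *: 'X)).
  apply: coef_eqm => n Hn; rewrite coef_dil !coef_poly Hn.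
  by rewrite mulrAC mulrC mulrA.
have e2 : eqm M (rho *: Ex M ^+ i - 1) ((rho *: Ex M - 1) \Po (i%:R *: 'X)).
  rewrite linearB /= linearZ /= -polyC1 comp_polyC polyC1.
  by apply: eqmB (eqmZ _ _ _ _ (Ex_dil M i)) (eqm_refl _ _).
apply: eqm_trans (eqmM _ _ _ _ _ e2 e1) _.
rewrite -comp_polyM -{2}(comp_polyX (i%:R *: 'X)).
apply: eqm_comp; first exact: X_dvd_dil.
exact: apost.
Qed.

Lemma comp_prod (I : finType) (F : I -> {poly algC}) T :
  (\prod_i F i) \Po T = \prod_i (F i \Po T).
Proof.
elim/big_rec2: _ => [|i a b _ <-]; first by rewrite -polyC1 comp_polyC.
by rewrite comp_polyM.
Qed.

Lemma comp_exp p k T : (p ^+ k) \Po T = (p \Po T) ^+ k.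
Proof.
elim: k => [|k IH]; first by rewrite !expr0 -polyC1 comp_polyC.
by rewrite !exprS comp_polyM IH.
Qed.

Definition Tsub M (xi : algC) := xi%:P * ('X * Ph M).

Lemma qpoch_comp M xi N : eqm M (qpoch_shift xi N \Po Tsub M xi)
   (\prod_(i < N) (1 - xi ^+ i.+1 *: Ex M ^+ i.+1)).
Proof.
rewrite /qpoch_shift big_add1 /= big_mkord comp_prod; apply: eqm_prod => i.
rewrite linearB /= -polyC1 comp_polyC polyC1 comp_exp.
apply: eqmB (eqm_refl _ _) _; rewrite -exprZn; apply: eqmX.
rewrite comp_polyD comp_polyX comp_polyC /Tsub.
have -> : xi *: Ex M = xi%:P * (Ex M - 1) + xi%:P by rewrite mulrBr mulr1 subrK mul_polyC.
by apply: eqmD (eqm_refl _ _); apply: eqmM (eqm_refl _ _) (XPh M).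
Qed.

Definition Hs M xi (i : nat) := tr M (fun n => apostol (xi ^+ i.+1) n * i.+1%:R ^+ n / n`!%:R).

Lemma prodH M xi N : eqm M ((\prod_(i < N) (1 - xi ^+ i.+1 *: Ex M ^+ i.+1)) * \prod_(i < N) Hs M xi i)
   (((-1) ^+ N * N`!%:R) *: 'X^N).
Proof.
have -> : \prod_(i < N) (1 - xi ^+ i.+1 *: Ex M ^+ i.+1) =
          (-1) ^+ N * \prod_(i < N) (xi ^+ i.+1 *: Ex M ^+ i.+1 - 1).
  by rewrite -[in (-1) ^+ N](card_ord N) -prodrN; apply: eq_bigr => i _; rewrite opprB.
rewrite -mulrA -big_split /= -scalerA.
have hm : ((-1) ^+ N : {poly algC}) = ((-1) ^+ N)%:P by rewrite rmorphXn rmorphN1.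
rewrite hm mul_polyC; apply: eqmZ.
rewrite /Hs. have := (eqm_prod _ _ _ _ (fun i : 'I_N => apost_dil M (xi ^+ i.+1) i.+1)) => H.
apply: (eqm_trans _ _ _ _ H).
rewrite scaler_prod prodr_const card_ord.
have -> : \prod_(i < N) (i.+1%:R : algC) = N`!%:R.
  by rewrite fact_prod natr_prod big_add1 /= big_mkord.
exact: eqm_refl.
Qed.

Lemma qpoch_neq0 xi N : qpoch_shift xi N != 0.
Proof.
rewrite /qpoch_shift prodf_seq_neq0; apply/allP => j; rewrite mem_index_iota => /andP [Hj _].
apply/implyP => _; apply/eqP => H.
have : size (('X + xi%:P) ^+ j) = 1%N.
  have -> : ('X + xi%:P) ^+ j = 1 by apply/eqP; rewrite eq_sym -subr_eq0 H.
  by rewrite size_poly1.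
move=> Hs; have := size_exp ('X + xi%:P) j; rewrite Hs size_XaddC /= mul1n => Hj0.
by move: Hj; rewrite -Hj0.
Qed.

Section Main.
Variables (xi : algC) (N : nat).
Let P := qpoch_shift xi N.
Let r := find (fun c => c != 0) P.
Let Q := fun i => P`_(i + r).

Lemma P_has : has (fun c => c != 0) P.
Proof.
apply/negPn/negP => Hn; have := qpoch_neq0 xi N; rewrite -/P => /negP; apply.
apply/eqP/polyP => i; rewrite coef0.
case: (ltnP i (size P)) => Hi; last by rewrite nth_default.
have := hasPn Hn _ (mem_nth 0 Hi); by rewrite negbK => /eqP.
Qed.

Lemma Q0 : Q 0 != 0.
Proof. by rewrite /Q add0n; have := nth_find 0 P_has. Qed.

Lemma P_split : P = 'X^r * drop_poly r P.
Proof.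
rewrite -{1}(poly_take_drop r P) mulrC.
have -> : take_poly r P = 0; last by rewrite add0r.
apply/polyP => i; rewrite coef_take_poly coef0; case: ifP => // Hi.
by apply/eqP; have := before_find 0 Hi => /negbT; rewrite negbK.
Qed.

Variable M : nat.
Let T := Tsub M xi.
Let B := tr M (ps_inv Q).
Let Hp := \prod_(i < N) Hs M xi i.

Lemma QB : eqm M ((drop_poly r P \Po T) * (B \Po T)) 1.
Proof.
rewrite -comp_polyM -[X in eqm _ _ X](comp_polyC 1 T) polyC1.
apply: eqm_comp; first by rewrite /T /Tsub mulrCA dvdp_mulr.
apply: (eqm_trans _ _ _ _ _ (tr_inv M _ Q0)).
apply: eqmMr; apply: coef_eqm => i Hi; by rewrite coef_drop_poly coef_poly Hi.
Qed.

Lemma main_cong : eqm M (xi ^+ r *: ('X^r * Hp))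
   (((-1) ^+ N * N`!%:R) *: ('X^N * (Ps M ^+ r * (B \Po T)))).
Proof.
have Ha : eqm M ((P \Po T) * Hp) (((-1) ^+ N * N`!%:R) *: 'X^N).
  apply: (eqm_trans _ _ _ _ _ (prodH M xi N)); apply: eqmMr; exact: qpoch_comp.
have Hb := eqmMr _ _ _ (Ps M ^+ r * (B \Po T)) Ha.
rewrite [X in eqm _ _ X]scalerAl; apply: (eqm_trans _ _ _ _ _ Hb).
rewrite {1}P_split comp_polyM comp_Xn_poly /T /Tsub -/T.
have -> : (xi%:P * ('X * Ph M)) ^+ r * (drop_poly r P \Po T) * Hp * (Ps M ^+ r * (B \Po T))
   = (xi ^+ r *: ('X^r * Hp)) * ((Ph M * Ps M) ^+ r * ((drop_poly r P \Po T) * (B \Po T))).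
  rewrite -!mul_polyC rmorphXn /= !exprMn; ring.
rewrite -[X in eqm _ X _]mulr1; apply: eqmM (eqm_refl _ _) _.
apply: eqm_sym; rewrite -[X in eqm _ _ X](mulr1 1); apply: eqmM; first by apply: eqmX_1; apply: PhPs.
exact: QB.
Qed.
End Main.

Definition rr xi N := find (fun c => c != 0) (qpoch_shift xi N).
Definition QQ xi N := fun i => (qpoch_shift xi N)`_(i + rr xi N).
Definition BB xi N M := tr M (ps_inv (QQ xi N)).
Definition Hp M xi N := \prod_(i < N) Hs M xi i.

Lemma main_cong' xi N M : eqm M (xi ^+ rr xi N *: ('X^(rr xi N) * Hp M xi N))
   (((-1) ^+ N * N`!%:R) *: ('X^N * (Ps M ^+ rr xi N * (BB xi N M \Po Tsub M xi)))).
Proof. exact: main_cong. Qed.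

Lemma QQ0 xi N : QQ xi N 0 != 0.
Proof. exact: Q0. Qed.

Lemma T0 M xi : (Tsub M xi).[0] = 0.
Proof. by rewrite horner_coef0 /Tsub coefCM coefXM mulr0. Qed.

Lemma coef0_PsB xi N M : (0 < M)%N ->
  (Ps M ^+ rr xi N * (BB xi N M \Po Tsub M xi))`_0 = (QQ xi N 0)^-1.
Proof.
move=> HM; rewrite coef0M -!horner_coef0 horner_exp horner_comp T0 !horner_coef0.
by rewrite !coef_poly HM Ps0 expr1n mul1r.
Qed.

Lemma r_le_N xi N : (rr xi N <= N)%N.
Proof.
rewrite leqNgt; apply/negP => HNr.
have := eqm_coef _ _ _ N (main_cong' xi N N.+1) (ltnSn N).
rewrite coefZ coefXnM HNr mulr0 coefZ coefXnM ltnn subnn coef0_PsB //.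
move/esym/eqP; rewrite !mulf_eq0 invr_eq0 (negbTE (QQ0 xi N)) orbF.
by rewrite signr_eq0 /= (negbTE (fact_neq0 N)).
Qed.

Lemma cong2 xi N M : xi != 0 -> (rr xi N <= M)%N ->
  eqm (M - rr xi N) (Hp M xi N)
   (((xi ^+ rr xi N)^-1 * ((-1) ^+ N * N`!%:R)) *: ('X^(N - rr xi N) * (Ps M ^+ rr xi N * (BB xi N M \Po Tsub M xi)))).
Proof.
move=> Hxi HrM; set r := rr xi N; set c := (-1) ^+ N * N`!%:R.
set Z := Ps M ^+ r * (BB xi N M \Po Tsub M xi).
have := main_cong' xi N M; rewrite -/r -/c -/Z.
have -> : ('X^N : {poly algC}) = 'X^r * 'X^(N - r) by rewrite -exprD subnKC // r_le_N.
rewrite -mulrA scalerAr [c *: _]scalerAr => /(eqm_cancel _ _ _ _ HrM) H.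
rewrite -scalerA -[Hp M xi N](scalerK (expf_neq0 r Hxi)).
exact: eqmZ.
Qed.

Definition Nor M (m : int) := tr M (fun v => norlund (m + 1) v / v`!%:R).

Lemma prodXn (I : finType) (F : I -> nat) :
  \prod_i ('X^(F i) : {poly algC}) = 'X^(\sum_i F i).
Proof. by rewrite (big_morph (fun n => 'X^n) (fun a b => exprD 'X a b) (expr0 'X)). Qed.

Lemma coef3 (n1 n2 : nat) (I : finType) (a b : nat -> algC) (c : I -> algC) (d : I -> nat) k :
  ((\sum_(u < n1) a u *: 'X^u) * (\sum_(v < n2) b v *: 'X^v) * (\sum_i c i *: 'X^(d i)))`_k
   = \sum_(u < n1) \sum_(v < n2) \sum_i a u * b v * c i * ((u + v + d i)%N == k)%:R.
Proof.
rewrite -mulrA big_distrl /= coef_sum; apply: eq_bigr => u _.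
rewrite big_distrl /= big_distrr /= coef_sum; apply: eq_bigr => v _.
rewrite big_distrr /= big_distrr /= coef_sum; apply: eq_bigr => f _.
have -> : a u *: 'X^u * (b v *: 'X^v * (c f *: 'X^(d f))) = (a u * b v * c f) *: ('X^(u + v + d f) : {poly algC}).
  by rewrite !exprD -!mul_polyC !rmorphM /=; ring.
by rewrite coefZ coefXn eq_sym.
Qed.

Lemma rhs_coef N m xi s : (N%:Z + m)%R = Posz s ->
  rhs_sum N m xi = (Ex s.+1 * Nor s.+1 m * \prod_(i < N) Hs s.+1 xi i)`_s.
Proof.
move=> HsN; rewrite /rhs_sum HsN /Ex /Nor /Hs /tr !poly_def.
under [X in _ * X]eq_bigr do rewrite poly_def.
rewrite bigA_distr_bigA /=.
under [X in _ * X]eq_bigr do rewrite scaler_prod prodXn.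
rewrite (coef3 s.+1 s.+1 _ ps_exp (fun v => norlund (m + 1) v / v`!%:R)
  (fun f : {ffun 'I_N -> 'I_s.+1} => \prod_(i0 < N) (apostol (xi ^+ i0.+1) (f i0) * i0.+1%:R ^+ (f i0) / (f i0)`!%:R))
  (fun f : {ffun 'I_N -> 'I_s.+1} => \sum_(i0 < N) (f i0 : nat))).
apply: eq_bigr => u _; apply: eq_bigr => v _.
rewrite big_mkcond /=; apply: eq_bigr => f _.
case: eqP => _; last by rewrite mulr0.
rewrite mulr1 /ps_exp invfM; ring.
Qed.

Lemma ps_pow0 a k : ps_pow a k 0 = a 0%N ^+ k.
Proof.
elim: k => [|k IH] //=; rewrite exprS -IH.
by rewrite /ps_pow /= {1}/ps_mul big_ord1.
Qed.

Lemma NorPs M (m : int) (r n0 : nat) : m + Posz r = Posz n0 ->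
  eqm M (Nor M m * Ps M ^+ r) (Ps M ^+ n0.+1).
Proof.
move=> Hmr; rewrite /Nor /norlund.
have Hnz : ps_expm1_div 0 != 0 by rewrite /ps_expm1_div invr_eq0 fact_neq0.
case Hm1: (m + 1) => [a|a].
  rewrite (tr_ext _ _ (ps_inv (ps_pow ps_expm1_div a))); last first.
    by move=> v _; rewrite mulrC mulrA mulVf ?mul1r // fact_neq0.
  have Ha : eqm M (tr M (ps_inv (ps_pow ps_expm1_div a))) (Ps M ^+ a).
    apply: (eqm_inv_uniq _ (tr M (ps_pow ps_expm1_div a))).
      by apply: tr_inv; rewrite ps_pow0 expf_neq0.
    apply: (eqm_trans _ _ _ _ (eqmMr _ _ _ _ (tr_pow M _ a))).
    by rewrite -exprMn; apply: eqmX_1; apply: PhPs.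
  have -> : (n0.+1 = a + r)%N by lia.
  by rewrite exprD; apply: eqmMr.
rewrite (tr_ext _ _ (ps_pow ps_expm1_div a.+1)); last first.
  by move=> v _; rewrite mulrC mulrA mulVf ?mul1r // fact_neq0.
have -> : (r = n0.+1 + a.+1)%N by lia.
rewrite exprD mulrCA -[X in eqm _ _ X]mulr1; apply: eqmM (eqm_refl _ _) _.
apply: (eqm_trans _ _ _ _ (eqmMr _ _ _ _ (tr_pow M _ a.+1))).
by rewrite -exprMn; apply: eqmX_1; apply: PhPs.
Qed.

Lemma level_change s M m xi N : (s < M)%N ->
  (Ex s.+1 * Nor s.+1 m * \prod_(i < N) Hs s.+1 xi i)`_s =
  (Ex M * Nor M m * \prod_(i < N) Hs M xi i)`_s.
Proof.
move=> HsM; apply: (eqm_coef s.+1); last exact: ltnSn.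
apply: eqm_sym; apply: eqmM; first apply: eqmM.
- exact: tr_le.
- exact: tr_le.
- by apply: eqm_prod => i; apply: tr_le.
Qed.

Lemma scal_id (t x y f b : algC) : t * t = 1 -> x != 0 -> y != 0 -> f != 0 ->
  t * (x / y) / f * (x^-1 * (t * f) * (y * b)) = b.
Proof.
move=> Ht Hx Hy Hf.
have -> : t * (x / y) / f * (x^-1 * (t * f) * (y * b)) = (t * t) * b by field; rewrite Hx Hy Hf.
by rewrite Ht mul1r.
Qed.

Theorem proposition5p1 (N : nat) (m : int) (k : nat) (xi : algC) :
  (1 <= N)%N -> k.-primitive_root xi ->
  A_coef m xi N = (-1) ^+ N * xi ^ (- m) / (N`!)%:R * rhs_sum N m xi.
Proof.
move=> HN Hprim.
have Hxi : xi != 0.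
  apply/eqP => H0; have := prim_expr_order Hprim; rewrite H0 expr0n.
  by rewrite eqn0Ngt (prim_order_gt0 Hprim) /= => /eqP; rewrite eq_sym oner_eq0.
have HrN := r_le_N xi N.
have LHS : A_coef m xi N = match (m + (rr xi N)%:Z)%R with
     | Posz n => ps_inv (QQ xi N) n | Negz _ => 0 end by [].
rewrite LHS; clear LHS.
case HsN: (N%:Z + m)%R => [s|s'].
  2: by rewrite /rhs_sum HsN mulr0; case Hmr: (m + _)%R => [n0|] //; lia.
set M := (s + N).+2.
have HsM : (s < M)%N by rewrite /M; lia.
rewrite (rhs_coef _ _ _ _ HsN) (level_change _ _ _ _ _ HsM).
set r := rr xi N.
have HrM : (r <= M)%N by rewrite /M; lia.
have HsMr : (s < M - r)%N by rewrite /M; lia.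
pose c : algC := (-1) ^+ N * N`!%:R.
pose Z := Ps M ^+ r * (BB xi N M \Po Tsub M xi).
have H2 := cong2 xi N M Hxi HrM.
rewrite -/r -/c -/Z in H2.
have -> : (Ex M * Nor M m * \prod_(i < N) Hs M xi i)`_s =
    ((xi ^+ r)^-1 * c) * ('X^(N - r) * (Ex M * Nor M m * Z))`_s.
  rewrite -coefZ; apply: (eqm_coef (M - r)) => //.
  have -> : (xi ^+ r)^-1 * c *: ('X^(N - r) * (Ex M * Nor M m * Z)) =
     Ex M * Nor M m * ((xi ^+ r)^-1 * c *: ('X^(N - r) * Z)).
    by rewrite -!mul_polyC; ring.
  by apply: eqmM (eqm_refl _ _) H2.
rewrite coefXnM.
case Hmr: (m + Posz r)%R => [n0|n0].
  have -> : (s < N - r)%N = false by apply/negbTE; rewrite -leqNgt; lia.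
  have -> : (s - (N - r) = n0)%N by lia.
  have -> : (Ex M * Nor M m * Z)`_n0 = (Ex M * Ps M ^+ n0.+1 * (BB xi N M \Po Tsub M xi))`_n0.
    apply: (eqm_coef M); last by rewrite /M; lia.
    rewrite /Z mulrA -(mulrA (Ex M)); apply: eqmMr; apply: eqmM (eqm_refl _ _) _.
    exact: NorPs.
  rewrite (lagrange_inv _ _ _ _ (_ : (n0 < M.-1)%N)); last by rewrite /M; lia.
  rewrite /BB coef_poly (_ : (n0 < M)%N); last by rewrite /M; lia.
  have -> : xi ^ (- m) = xi ^+ r * (xi ^+ n0)^-1.
    have -> : - m = Posz r - Posz n0 by lia.
    by rewrite exprzDr ?unitfE // -exprnN -exprnP.
  rewrite /c; symmetry; apply: scal_id; rewrite ?expf_neq0 ?fact_neq0 //.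
  by rewrite -expr2 -exprM mulnC exprM sqrrN expr1n expr1n.
have -> : (s < N - r)%N = true by lia.
by rewrite mulr0 !mulr0.
Qed.
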